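(* Let $d>1$, let $E,F$ be complex elliptic curves, let $P\in E[d]$ and $Q\in F[d]$ be points of order exactly $d$, let $A=(E\times F)/\langle (P,Q)\rangle$ with quotient map $\mu$, and let $H$ be the polarisation on $A$ with $\mu^*H=\mathcal O_E(d\cdot 0)\boxtimes\mathcal O_F(d\cdot 0)$ (a polarisation of type $(1,d)$), with polarisation isogeny $\phi_H:A\to\hat A$. Identify $E$ with $\mu(E\times\{0\})$, $F$ with $\mu(\{0\}\times F)$, $P$ with $\mu(P,0)$ and $Q$ with $\mu(0,Q)$. Then $Q=-P$ in $A$, $E\cap F=\langle P\rangle\subseteq\ker\phi_H$, and $E\cap\ker\phi_H=F\cap\ker\phi_H=\langle P\rangle$. *)

(* Defs.v *)
From HB Require Import structures.
From mathcomp Require Import all_boot all_order all_algebra.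
From mathcomp Require Import complex.
From mathcomp Require Import reals.
Set Implicit Arguments. Unset Strict Implicit. Unset Printing Implicit Defensive.
Import Order.TTheory GRing.Theory Num.Theory.
Local Open Scope ring_scope.
Local Open Scope complex_scope.

Section Defs.
Variable R : realType.
Local Notation C := R[i].

(* The lattice Z w1 + Z w2 in C; E = C / lat w1 w2 is a complex elliptic
   curve when 0 < Im (w1^* * w2) (w1, w2 an oriented R-basis of C). *)
Definition lat (w1 w2 : C) (z : C) : Prop :=
  exists a b : int, z = a%:~R * w1 + b%:~R * w2.

Definition order_exactly (L : C -> Prop) (d : nat) (p : C) : Prop :=
  L (d%:R * p) /\ forall k : nat, (0 < k < d)%N -> ~ L (k%:R * p).

(* Hermitian form (Appell-Humbert) of O_E(0) on E = C / lat w1 w2 :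
   H(z,w) = z conj(w) / Im(conj(w1) w2); its imaginary part is the
   unimodular alternating form on the lattice. *)
Definition ppol (w1 w2 : C) (z w : C) : C :=
  z * w^* / ((complex.Im (w1^* * w2) : R)%:C).

(* The lattice of A = (E x F)/<(P,Q)> inside C^2 = universal cover of A:
   Lambda_A = (L_E x L_F) + Z (p,q). *)
Definition quot_lattice (e1 e2 f1 f2 p q : C) (v : C * C) : Prop :=
  exists k : int, lat e1 e2 (v.1 - k%:~R * p) /\ lat f1 f2 (v.2 - k%:~R * q).

Definition congA (Lam : C * C -> Prop) (v w : C * C) : Prop :=
  Lam (v.1 - w.1, v.2 - w.2).

(* Hermitian form of H on C^2 (the same as that of mu^* H), where
   mu^* H = O_E(d.0) boxtimes O_F(d.0) *)
Definition pol_form (d : nat) (e1 e2 f1 f2 : C) (v w : C * C) : C :=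
  d%:R * ppol e1 e2 v.1 w.1 + d%:R * ppol f1 f2 v.2 w.2.

(* v mod Lam lies in ker phi_H, where phi_H : A -> hat A, v |-> H(v, .)
   and hat A = (antilinear forms) / {l | Im l(Lam) subset Z}. *)
Definition inKer (Lam : C * C -> Prop) (H : C * C -> C * C -> C) (v : C * C) : Prop :=
  forall l, Lam l -> exists k : int, complex.Im (H v l) = k%:~R.

Definition onE (Lam : C * C -> Prop) (v : C * C) : Prop :=
  exists z : C, congA Lam v (z, 0).
Definition onF (Lam : C * C -> Prop) (v : C * C) : Prop :=
  exists z : C, congA Lam v (0, z).
Definition inSub (Lam : C * C -> Prop) (p : C) (v : C * C) : Prop :=
  exists k : int, congA Lam v (k%:~R * p, 0).

End Defs.

(* Main.v *)
Require Import Defs.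
From HB Require Import structures.
From mathcomp Require Import all_boot all_order all_algebra.
From mathcomp Require Import complex reals ring lra.
Import Order.TTheory GRing.Theory Num.Theory.
Local Open Scope ring_scope.
Local Open Scope complex_scope.

Section S.
Variable R : realType.
Local Notation C := R[i].

Definition om (e1 e2 z w : C) : R := complex.Im (ppol e1 e2 z w).
Lemma omE e1 e2 z w : om e1 e2 z w =
  (complex.Im z * complex.Re w - complex.Re z * complex.Im w) / complex.Im (e1^* * e2).
Proof.
rewrite /om /ppol -fmorphV.
case: z => a b; case: w => c d; case: e1 => x y; case: e2 => u v.
simpc. rewrite /=. ring.
Qed.

Lemma D0 (e1 e2 : C) : 0 < complex.Im (e1^* * e2) -> complex.Im (e1^* * e2) != 0.
Proof. by move=> h; rewrite gt_eqF. Qed.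

Ltac ct := move/D0; rewrite !omE;
  repeat match goal with |- context [complex.Im (?z)] => is_var z; case: z => ? ? end;
  simpc; rewrite /= => ?.

Lemma omDl e1 e2 z1 z2 w : 0 < complex.Im (e1^* * e2) -> om e1 e2 (z1 + z2) w = om e1 e2 z1 w + om e1 e2 z2 w.
Proof. ct; field; done. Qed.
Lemma omDr e1 e2 z w1 w2 : 0 < complex.Im (e1^* * e2) -> om e1 e2 z (w1 + w2) = om e1 e2 z w1 + om e1 e2 z w2.
Proof. ct; field; done. Qed.
Lemma omZl e1 e2 r z w : 0 < complex.Im (e1^* * e2) -> om e1 e2 (r%:C * z) w = r * om e1 e2 z w.
Proof. ct; field; done. Qed.
Lemma omZr e1 e2 r z w : 0 < complex.Im (e1^* * e2) -> om e1 e2 z (r%:C * w) = r * om e1 e2 z w.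
Proof. ct; field; done. Qed.
Lemma omxx e1 e2 z : 0 < complex.Im (e1^* * e2) -> om e1 e2 z z = 0.
Proof. ct; field; done. Qed.
Lemma om0r e1 e2 z : 0 < complex.Im (e1^* * e2) -> om e1 e2 z 0 = 0.
Proof. ct; field; done. Qed.
Lemma om12 e1 e2 : 0 < complex.Im (e1^* * e2) -> om e1 e2 e1 e2 = -1.
Proof. ct; field; done. Qed.
Lemma om21 e1 e2 : 0 < complex.Im (e1^* * e2) -> om e1 e2 e2 e1 = 1.
Proof. ct; field; done. Qed.
Lemma recon e1 e2 z : 0 < complex.Im (e1^* * e2) -> z = (om e1 e2 z e1)%:C * e2 - (om e1 e2 z e2)%:C * e1.
Proof. ct; congr (_ +i* _); field; done. Qed.
Lemma intC (k : int) : (k%:~R : C) = (k%:~R : R)%:C.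
Proof. by rewrite rmorph_int. Qed.
Lemma natC (n : nat) : (n%:R : C) = (n%:R : R)%:C.
Proof. by rewrite rmorph_nat. Qed.

Section L.
Variables e1 e2 : C.
Hypothesis hD : 0 < complex.Im (e1^* * e2).
Local Notation om := (om e1 e2).
Local Notation L := (lat e1 e2).

Let omDl' z1 z2 w : om (z1 + z2) w = om z1 w + om z2 w := omDl e1 e2 z1 z2 w hD.
Let omDr' z w1 w2 : om z (w1 + w2) = om z w1 + om z w2 := omDr e1 e2 z w1 w2 hD.
Let omZl' r z w : om (r%:C * z) w = r * om z w := omZl e1 e2 r z w hD.
Let omZr' r z w : om z (r%:C * w) = r * om z w := omZr e1 e2 r z w hD.
Let omxx' z : om z z = 0 := omxx e1 e2 z hD.
Let om12' : om e1 e2 = -1 := om12 e1 e2 hD.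
Let om21' : om e2 e1 = 1 := om21 e1 e2 hD.

Lemma omIl (k : int) z w : om (k%:~R * z) w = k%:~R * om z w.
Proof. by rewrite intC omZl'. Qed.
Lemma omIr (k : int) z w : om z (k%:~R * w) = k%:~R * om z w.
Proof. by rewrite intC omZr'. Qed.
Lemma omNl (k : nat) z w : om (k%:R * z) w = k%:R * om z w.
Proof. by rewrite natC omZl'. Qed.
Lemma omNr (k : nat) z w : om z (k%:R * w) = k%:R * om z w.
Proof. by rewrite natC omZr'. Qed.

Lemma om_lat z w : L z -> L w -> om z w \is a Num.int.
Proof.
move=> [a [b ->]] [c [d ->]].
rewrite !omDl' !omIl !omDr' !omIr om12' om21' !omxx'.
apply/intrP; exists (b * c - a * d); rewrite rmorphB !rmorphM /=; ring.
Qed.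

Lemma lat_eq x y : x = y -> L x -> L y. Proof. by move=> ->. Qed.
Lemma lat0 : L 0. Proof. by exists 0, 0; ring. Qed.
Lemma latD x y : L x -> L y -> L (x + y).
Proof. move=> [a [b ->]] [c [d ->]]; exists (a + c), (b + d); rewrite !rmorphD /=; ring. Qed.

Variables (d : nat) (p : C).
Hypothesis hd : (1 < d)%N.
Hypothesis hord : order_exactly L d p.

Lemma intpart lam' lam (m j : int) : L lam' -> L lam ->
  d%:R * om (lam' + m%:~R * p) (lam + j%:~R * p) \is a Num.int.
Proof.
move=> h1 h2; have hdp := hord.1.
have i1 : d%:R * om lam' p \is a Num.int by rewrite -omNr; apply: om_lat.
have i2 : d%:R * om p lam \is a Num.int by rewrite -omNl; apply: om_lat.
have i3 : om lam' lam \is a Num.int by apply: om_lat.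
rewrite !omDl' !omDr' !omIl !omIr omxx' !mulrDr !(mulrCA d%:R) !mulr0 addr0.
apply: rpredD; [apply: rpredD|]; apply: rpredM => //; first [exact: rpred_nat | exact: rpred_int].
Qed.

Lemma core w : d%:R * om w e1 \is a Num.int -> d%:R * om w e2 \is a Num.int ->
  d%:R * om w p \is a Num.int -> exists n : int, L (w - n%:~R * p).
Proof.
move=> /intrP[B hB] /intrP[A hA] /intrP[t ht].
case: hord => [[al [be hdp]] hnot].
have d0 : (0 < d)%N by apply: ltnW.
have cop : gcdn (gcdn `|al| `|be|) d = 1%N.
{ set g := gcdn _ d.
  have g0 : (0 < g)%N by rewrite gcdn_gt0 d0 orbT.
  have gd : (g %| d)%N by apply: dvdn_gcdr.
  have gal : (g%:Z %| al)%Z by rewrite dvdzE /= (dvdn_trans (dvdn_gcdl _ _) (dvdn_gcdl _ _)).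
  have gbe : (g%:Z %| be)%Z by rewrite dvdzE /= (dvdn_trans (dvdn_gcdl _ _) (dvdn_gcdr _ _)).
  case: (ltngtP g 1) => // [|g1]; first by rewrite ltnNge g0.
  exfalso; have H := hnot (d %/ g)%N; apply: H.
  - by rewrite divn_gt0 // dvdn_leq //= ltn_Pdiv.
  - exists (al %/ g%:Z)%Z, (be %/ g%:Z)%Z.
    apply: (@mulfI _ (g%:R : C)); first by rewrite pnatr_eq0 -lt0n.
    rewrite mulrA -natrM mulnC divnK // hdp -{1}(divzK gal) -{1}(divzK gbe).
    ring. }
have [u [v huv]] := Bezoutz al be.
have [u' [v' huv']] := Bezoutz (gcdz al be) d.
have e : gcdz (gcdz al be) d = 1 by rewrite /gcdz !absz_nat cop.
have hx : al * (u'*u) + be * (u'*v) + d%:Z * v' = 1.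
{ move: huv'; rewrite e -huv => <-; ring. }
have hrel : d%:Z * t = al * B + be * A.
{ apply: (@intr_inj R). rewrite rmorphD !rmorphM /= -hB -hA -ht.
  have : om w (d%:R * p) = al%:~R * om w e1 + be%:~R * om w e2 by rewrite hdp omDr' !omIr.
  rewrite omNr => ->; ring. }
set n := - A * (u'*u) + B * (u'*v).
exists n.
have dw : d%:R * w = B%:~R * e2 - A%:~R * e1.
{ by rewrite {1}(recon e1 e2 w hD) mulrBr !mulrA natC -!rmorphM /= hB hA -!intC. }
exists (- (u'*v) * t - A * v'), ((u'*u) * t + B * v').
apply: (@mulfI _ (d%:R : C)); first by rewrite pnatr_eq0 -lt0n.
have h1 : - A - n * al = d%:Z * (- (u'*v) * t - A * v').
{ have -> : d%:Z * (- (u'*v) * t - A * v') = - (u'*v) * (d%:Z * t) - A * (d%:Z * v') by ring.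
  rewrite hrel. have -> : d%:Z * v' = 1 - al * (u'*u) - be * (u'*v) by rewrite -hx; ring.
  rewrite /n; ring. }
have h2 : B - n * be = d%:Z * ((u'*u) * t + B * v').
{ have -> : d%:Z * ((u'*u) * t + B * v') = (u'*u) * (d%:Z * t) + B * (d%:Z * v') by ring.
  rewrite hrel. have -> : d%:Z * v' = 1 - al * (u'*u) - be * (u'*v) by rewrite -hx; ring.
  rewrite /n; ring. }
transitivity (d%:R * w - n%:~R * (d%:R * p)); first by ring.
rewrite dw hdp.
transitivity ((- A - n * al)%:~R * e1 + (B - n * be)%:~R * e2); first by ring.
rewrite h1 h2; ring.
Qed.

Lemma intpart2 x y (m j : int) : L (x - m%:~R * p) -> L (y - j%:~R * p) ->
  d%:R * om x y \is a Num.int.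
Proof. by move=> h1 h2; have := intpart _ _ m j h1 h2; rewrite !subrK. Qed.
End L.

Lemma latR (e1 e2 x y : C) : lat e1 e2 x -> x = y -> lat e1 e2 y.
Proof. by move=> h <-. Qed.

Lemma ImH d e1 e2 f1 f2 v l : complex.Im (pol_form d e1 e2 f1 f2 v l) =
  d%:R * om e1 e2 v.1 l.1 + d%:R * om f1 f2 v.2 l.2.
Proof.
rewrite /pol_form /om natC; case: (ppol e1 e2 _ _) => ? ?; case: (ppol f1 f2 _ _) => ? ?.
by simpc.
Qed.
End S.
Arguments latR {R e1 e2 x y}.
Arguments intpart2 {R e1 e2} hD {d p} hord {x y} m j.
Arguments core {R e1 e2} hD {d p} hd hord {w}.

Theorem lemma2p4 (R : realType) (d : nat) (e1 e2 f1 f2 p q : R[i]) :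
  (1 < d)%N ->
  0 < complex.Im (e1^* * e2) -> 0 < complex.Im (f1^* * f2) ->
  order_exactly (lat e1 e2) d p -> order_exactly (lat f1 f2) d q ->
  let Lam := quot_lattice e1 e2 f1 f2 p q in
  let H := pol_form d e1 e2 f1 f2 in
  congA Lam (0, q) (- p, 0) /\
  (forall v, (onE Lam v /\ onF Lam v) <-> inSub Lam p v) /\
  (forall v, inSub Lam p v -> inKer Lam H v) /\
  (forall v, (onE Lam v /\ inKer Lam H v) <-> inSub Lam p v) /\
  (forall v, (onF Lam v /\ inKer Lam H v) <-> inSub Lam p v).
Proof.
move=> hd hE hF ordp ordq Lam H.
have P2 : forall v, (onE Lam v /\ onF Lam v) <-> inSub Lam p v.
{ move=> [v1 v2]; rewrite /onE /onF /inSub /congA /Lam /quot_lattice /=; split.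
  - move=> [[z [k [_ hF2]]] [z' [j [hE1 _]]]]; exists (j - k), k; split => //.
    by apply: (latR hE1); rewrite rmorphB /=; rewrite /=; ring.
  - move=> [n [k [h1 h2]]]; split.
    + by exists (n%:~R * p), k.
    + exists (v2 - (n + k)%:~R * q), (n + k); split.
      * by apply: (latR h1); rewrite rmorphD /=; rewrite /=; ring.
      * by exists 0, 0; rewrite /=; ring. }
have P3 : forall v, inSub Lam p v -> inKer Lam H v.
{ move=> [v1 v2] [n [k [h1 h2]]] [l1 l2] [j [hl1 hl2]]; apply/intrP.
  rewrite /H ImH /=; apply: rpredD.
  - apply: (intpart2 hE ordp (n + k) j) => //.
    by apply: (latR h1); rewrite rmorphD /=; rewrite /=; ring.
  - apply: (intpart2 hF ordq k j) => //.
    by apply: (latR h2); rewrite /=; ring. }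
have kerI : forall v l, inKer Lam H v -> Lam l ->
    d%:R * om R e1 e2 v.1 l.1 + d%:R * om R f1 f2 v.2 l.2 \is a Num.int.
{ move=> v l hK hl; apply/intrP; rewrite -ImH; exact: hK. }
have Lpq : Lam (p, q).
{ exists 1; split; by exists 0, 0; rewrite /=; ring. }
split.
{ rewrite /congA /Lam /quot_lattice /=; exists 1; split; by exists 0, 0; rewrite /=; ring. }
split => //. split => //. split.
- move=> [v1 v2]; split; last first.
  { by move=> hs; split; [exact: (proj2 (P2 _) hs).1 | exact: P3]. }
  move=> [[z [k [_ h2]]] hK].
  have L1 : Lam (e1, 0) by exists 0; split; [exists 1, 0 | exists 0, 0]; rewrite /=; ring.
  have L2 : Lam (e2, 0) by exists 0; split; [exists 0, 1 | exists 0, 0]; rewrite /=; ring.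
  have k1 := kerI _ _ hK L1; have k2 := kerI _ _ hK L2; have k3 := kerI _ _ hK Lpq.
  rewrite /= in k3 h2; rewrite /= !om0r // !mulr0 !addr0 in k1 k2.
  have hq : d%:R * om R f1 f2 v2 q \is a Num.int.
  { apply: (intpart2 hF ordq k 1).
    - by apply: (latR h2); rewrite /=; ring.
    - by exists 0, 0; rewrite /=; ring. }
  have hp : d%:R * om R e1 e2 v1 p \is a Num.int.
  { by rewrite -(addrK (d%:R * om R f1 f2 v2 q) (d%:R * om R e1 e2 v1 p)) rpredB. }
  have [n hn] := core hE hd ordp k1 k2 hp.
  exists (n - k), k; split => //.
  by apply: (latR hn); rewrite rmorphB /=; rewrite /=; ring.
- move=> [v1 v2]; split; last first.
  { move=> hs; split; [exact: (proj2 (P2 _) hs).2 | exact: P3]. }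
  move=> [[z [j [h1 _]]] hK].
  have L1 : Lam (0, f1) by exists 0; split; [exists 0, 0 | exists 1, 0]; rewrite /=; ring.
  have L2 : Lam (0, f2) by exists 0; split; [exists 0, 0 | exists 0, 1]; rewrite /=; ring.
  have k1 := kerI _ _ hK L1; have k2 := kerI _ _ hK L2; have k3 := kerI _ _ hK Lpq.
  rewrite /= in k3 h1; rewrite /= !om0r // !mulr0 !add0r in k1 k2.
  have hp : d%:R * om R e1 e2 v1 p \is a Num.int.
  { apply: (intpart2 hE ordp j 1).
    - by apply: (latR h1); rewrite /=; ring.
    - by exists 0, 0; rewrite /=; ring. }
  have hq : d%:R * om R f1 f2 v2 q \is a Num.int.
  { by rewrite -(addKr (d%:R * om R e1 e2 v1 p) (d%:R * om R f1 f2 v2 q)) rpredD ?rpredN. }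
  have [n hn] := core hF hd ordq k1 k2 hq.
  exists (j - n), n; split.
  + by apply: (latR h1); rewrite rmorphB /=; rewrite /=; ring.
  + by apply: (latR hn); rewrite /=; ring.
Qed.
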